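(* Let $n\ge2$ and $\mu\in[0,1-\frac1n]$. Then problems (P) and (RP) have the same optimal solutions: an $n\times n$ matrix is an optimal solution of (P) if and only if it is an optimal solution of (RP).
   Context: An $n\times n$ checkerboard copula is a real $n\times n$ matrix $P=(p_{ij})$ with nonnegative entries whose row and column sums all equal $\frac1n$. $\Xi=(\xi_{ij})$ with $\xi_{ij}=1$ if $i=j$, $2$ if $i>j$, $0$ if $i<j$. Let $I(P)=\sum_{i,j}p_{ij}\log p_{ij}$ with $0\log0=0$. Problem (P): minimize $I(P)$ over $n\times n$ checkerboard copulas $P$ with $1-\mathrm{tr}(\Xi P\Xi P^\top)=\mu$. Problem (RP): minimize $I(P)$ over $n\times n$ checkerboard copulas $P$ with $1-\mathrm{tr}(\Xi P\Xi P^\top)\ge\mu$. *)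

(* Defs.v *)
From mathcomp Require Import all_boot all_order all_algebra.
From mathcomp Require Import reals exp.
Set Implicit Arguments. Unset Strict Implicit. Unset Printing Implicit Defensive.
Import Order.TTheory GRing.Theory Num.Theory.
Local Open Scope ring_scope.

Section Defs.
Variable R : realType.

(* n x n checkerboard copula: nonnegative entries, all row and column sums 1/n *)
Definition checkerboard (n : nat) (P : 'M[R]_n) : Prop :=
  (forall i j, 0 <= P i j) /\
  (forall i, \sum_(j < n) P i j = n%:R^-1) /\
  (forall j, \sum_(i < n) P i j = n%:R^-1).

Definition Xi (n : nat) : 'M[R]_n :=
  \matrix_(i < n, j < n) (if i == j then 1 else if (j < i)%N then 2 else 0).

Definition xlogx (x : R) : R := if x == 0 then 0 else x * ln x.

Definition Ient (n : nat) (P : 'M[R]_n) : R :=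
  \sum_(i < n) \sum_(j < n) xlogx (P i j).

Definition constr (n : nat) (P : 'M[R]_n) : R :=
  1 - \tr (Xi n *m P *m Xi n *m P^T).

Definition feasible_P (n : nat) (mu : R) (P : 'M[R]_n) : Prop :=
  checkerboard P /\ constr P = mu.

Definition feasible_RP (n : nat) (mu : R) (P : 'M[R]_n) : Prop :=
  checkerboard P /\ constr P >= mu.

Definition optimal_P (n : nat) (mu : R) (P : 'M[R]_n) : Prop :=
  feasible_P mu P /\ forall Q : 'M[R]_n, feasible_P mu Q -> Ient P <= Ient Q.

Definition optimal_RP (n : nat) (mu : R) (P : 'M[R]_n) : Prop :=
  feasible_RP mu P /\ forall Q : 'M[R]_n, feasible_RP mu Q -> Ient P <= Ient Q.

End Defs.

(* Main.v *)
Require Import Defs.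
From mathcomp Require Import all_boot all_order all_algebra.
From mathcomp Require Import reals exp.
From mathcomp Require Import boolp classical_sets topology normedtype derive.
From mathcomp Require Import ring lra.
Import numFieldTopology.Exports numFieldNormedType.Exports.
Set Implicit Arguments. Unset Strict Implicit.
Import Order.TTheory GRing.Theory Num.Theory.
Local Open Scope ring_scope.

Section H.
Variable R : realType.

Lemma xlogx0 : xlogx (0:R) = 0. Proof. by rewrite /xlogx eqxx. Qed.
Lemma xlogxE {x : R} : 0 < x -> xlogx x = x * ln x.
Proof. by move=> hx; rewrite /xlogx gt_eqF. Qed.

Lemma ln_lt_sub1 {y : R} : 0 < y -> y != 1 -> ln y < y - 1.
Proof.
move=> y0 y1.
have hl : ln y != 0.
  by apply/negP => /eqP h; move: y1; rewrite -(lnK y0) h expR0 eqxx.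
have := expR_gt1Dx hl; rewrite lnK ?posrE //; lra.
Qed.

Lemma tangent_lt {a b : R} : 0 <= a -> 0 < b -> a != b ->
  xlogx b + (1 + ln b) * (a - b) < xlogx a.
Proof.
move=> a0 b0 ab; rewrite (xlogxE b0).
have [->|a0'] := eqVneq a 0.
  by rewrite xlogx0; have := b0; lra.
have apos : 0 < a by rewrite lt_neqAle eq_sym a0' a0.
rewrite (xlogxE apos).
have hq : 0 < b / a by rewrite divr_gt0.
have hq1 : b / a != 1.
  apply/negP => /eqP h; move: ab.
  by rewrite -[b](divfK a0') h mul1r eqxx.
have := ln_lt_sub1 hq hq1.
rewrite lnM ?posrE ?invr_gt0 // lnV ?posrE // => h.
have h3 : a * (ln b + - ln a) < a * (b / a - 1) by rewrite ltr_pM2l.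
have e : a * (b / a - 1) = b - a by field; rewrite a0'.
rewrite e in h3; nra.
Qed.

Lemma tangent_le {a b : R} : 0 <= a -> 0 < b ->
  xlogx b + (1 + ln b) * (a - b) <= xlogx a.
Proof.
move=> a0 b0; have [->|ab] := eqVneq a b; first by rewrite subrr mulr0 addr0.
exact/ltW/tangent_lt.
Qed.

Lemma xlogx_convex (a b t : R) : 0 <= a -> 0 < b -> 0 <= t <= 1 ->
  xlogx ((1 - t) * a + t * b) <= (1 - t) * xlogx a + t * xlogx b.
Proof.
move=> a0 b0 /andP[t0 t1].
have [->|tn0] := eqVneq t 0; first by rewrite !(subr0, mul1r, mul0r, addr0).
have tpos : 0 < t by rewrite lt_neqAle eq_sym tn0 t0.
set m := (1 - t) * a + t * b.
have mpos : 0 < m by rewrite /m; nra.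
have h1 := tangent_le a0 mpos.
have h2 := tangent_le (ltW b0) mpos.
have t1' : 0 <= 1 - t by lra.
have e1 := ler_wpM2l t1' h1.
have e2 := ler_wpM2l t0 h2.
set L := 1 + ln m in e1 e2.
have E : (1 - t) * (xlogx m + L * (a - m)) + t * (xlogx m + L * (b - m)) = xlogx m.
  by rewrite /m; ring.
lra.
Qed.


Variable n : nat.
Hypothesis n0 : (0 < n)%N.

Definition Pi : 'M[R]_n := \matrix_(i, j) (n%:R ^+ 2)^-1.
Definition mix (t : R) (Q : 'M[R]_n) := (1 - t) *: Q + t *: Pi.

Lemma nR0 : (n%:R : R) != 0.
Proof. by rewrite pnatr_eq0 -lt0n. Qed.

Lemma sum_const_n (c : R) : \sum_(i < n) c = n%:R * c.
Proof. by rewrite sumr_const card_ord mulr_natl. Qed.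

Lemma checkerboard_Pi : checkerboard Pi.
Proof.
split; first by move=> i j; rewrite mxE invr_ge0 exprn_ge0 // ler0n.
have h : \sum_(j < n) (n%:R ^+ 2 : R)^-1 = n%:R^-1.
  by rewrite sum_const_n; by field; rewrite nR0.
by split => i; rewrite -h; apply: eq_bigr => j _; rewrite mxE.
Qed.

Lemma checkerboard_mix t (Q : 'M[R]_n) : 0 <= t <= 1 -> checkerboard Q -> checkerboard (mix t Q).
Proof.
move=> /andP[t0 t1] [Q0 [Qr Qc]]; have [P0 [Pr Pc]] := checkerboard_Pi.
split.
  move=> i j; have := Q0 i j; have := P0 i j; rewrite !mxE => h1 h2; nra.
split.
  move=> i; under eq_bigr do rewrite !mxE.
  rewrite big_split /= -!mulr_sumr Qr.
  have := Pr i; under eq_bigr do rewrite mxE; move=> ->; ring.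
move=> j; under eq_bigr do rewrite !mxE.
rewrite big_split /= -!mulr_sumr Qc.
have := Pc j; under eq_bigr do rewrite mxE; move=> ->; ring.
Qed.

Lemma sumsum_cb (Q : 'M[R]_n) : checkerboard Q -> \sum_(i < n) \sum_(j < n) Q i j = 1.
Proof.
move=> [_ [Qr _]]; under eq_bigr do rewrite Qr.
by rewrite sum_const_n divff // nR0.
Qed.

Lemma sumsum_split (F G : 'I_n -> 'I_n -> R) c :
  \sum_(i < n) \sum_(j < n) (F i j + c * G i j) =
  \sum_(i < n) \sum_(j < n) F i j + c * \sum_(i < n) \sum_(j < n) G i j.
Proof.
rewrite mulr_sumr -big_split; apply: eq_bigr => i _.
by rewrite mulr_sumr -big_split.
Qed.

Lemma Ient_Pi_le (Q : 'M[R]_n) : checkerboard Q -> Ient Pi <= Ient Q.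
Proof.
move=> cQ; have [Q0 _] := cQ.
set p : R := (n%:R ^+ 2)^-1.
have p0 : 0 < p by rewrite invr_gt0 exprn_gt0 // ltr0n.
have : \sum_(i < n) \sum_(j < n) (xlogx p + (1 + ln p) * (Q i j - p)) <= Ient Q.
  by apply: ler_sum => i _; apply: ler_sum => j _; apply: tangent_le.
rewrite (sumsum_split (fun _ _ => xlogx p) (fun i j => Q i j - p)).
have -> : \sum_(i < n) \sum_(j < n) (Q i j - p) = 0.
  under eq_bigr do rewrite sumrB.
  rewrite sumrB sumsum_cb // !sum_const_n /p; by field; rewrite nR0.
rewrite mulr0 addr0.
suff -> : Ient Pi = \sum_(i < n) \sum_(j < n) xlogx p by [].
by apply: eq_bigr => i _; apply: eq_bigr => j _; rewrite mxE.
Qed.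

Lemma Ient_Pi_lt (Q : 'M[R]_n) : checkerboard Q -> Q != Pi -> Ient Pi < Ient Q.
Proof.
move=> cQ QP; have [Q0 _] := cQ.
set p : R := (n%:R ^+ 2)^-1.
have p0 : 0 < p by rewrite invr_gt0 exprn_gt0 // ltr0n.
have [i0 [j0 hij]] : exists i j, Q i j != p.
  case: (boolP [exists i, [exists j, Q i j != p]]).
    by move=> /existsP[i /existsP[j h]]; exists i, j.
  move=> /negP h; exfalso; move/negP: QP; apply; apply/eqP/matrixP => i j.
  rewrite mxE; apply/eqP/negPn/negP => hn; apply: h.
  by apply/existsP; exists i; apply/existsP; exists j.
have : \sum_(i < n) \sum_(j < n) (xlogx p + (1 + ln p) * (Q i j - p)) < Ient Q.
  rewrite /Ient (bigD1 i0) //= [X in _ < X](bigD1 i0) //=.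
  apply: ltr_leD; last first.
    by apply: ler_sum => i _; apply: ler_sum => j _; apply: tangent_le.
  rewrite (bigD1 j0) //= [X in _ < X](bigD1 j0) //=.
  apply: ltr_leD; first exact: tangent_lt.
  by apply: ler_sum => j _; apply: tangent_le.
rewrite (sumsum_split (fun _ _ => xlogx p) (fun i j => Q i j - p)).
have -> : \sum_(i < n) \sum_(j < n) (Q i j - p) = 0.
  under eq_bigr do rewrite sumrB.
  rewrite sumrB sumsum_cb // !sum_const_n /p; by field; rewrite nR0.
rewrite mulr0 addr0.
suff -> : Ient Pi = \sum_(i < n) \sum_(j < n) xlogx p by [].
by apply: eq_bigr => i _; apply: eq_bigr => j _; rewrite mxE.
Qed.

Lemma Ient_mix t (Q : 'M[R]_n) : 0 <= t <= 1 -> checkerboard Q ->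
  Ient (mix t Q) <= (1 - t) * Ient Q + t * Ient Pi.
Proof.
move=> ht [Q0 _].
have p0 : 0 < (n%:R ^+ 2 : R)^-1 by rewrite invr_gt0 exprn_gt0 // ltr0n.
rewrite /Ient !mulr_sumr -big_split; apply: ler_sum => i _.
rewrite !mulr_sumr -big_split; apply: ler_sum => j _.
rewrite !mxE; exact: xlogx_convex.
Qed.


Definition Bf (X Y : 'M[R]_n) := \tr (Xi R n *m X *m Xi R n *m Y^T).

Lemma BfDl X Y Z : Bf (X + Y) Z = Bf X Z + Bf Y Z.
Proof. by rewrite /Bf mulmxDr !mulmxDl mxtraceD. Qed.
Lemma BfDr X Y Z : Bf Z (X + Y) = Bf Z X + Bf Z Y.
Proof. by rewrite /Bf linearD /= mulmxDr mxtraceD. Qed.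
Lemma BfZl a X Z : Bf (a *: X) Z = a * Bf X Z.
Proof. by rewrite /Bf -scalemxAr -!scalemxAl mxtraceZ. Qed.
Lemma BfZr a X Z : Bf Z (a *: X) = a * Bf Z X.
Proof. by rewrite /Bf linearZ /= -scalemxAr mxtraceZ. Qed.

Lemma constr_mix_poly (Q : 'M[R]_n) : exists p : {poly R},
  forall t, constr (mix t Q) = p.[t].
Proof.
set D := Pi - Q.
have eM t : mix t Q = Q + t *: D.
  by rewrite /mix /D scalerBl scale1r scalerBr addrA addrAC.
clearbody D.
exists ((1 - Bf Q Q)%:P - (Bf D Q + Bf Q D)%:P * 'X - (Bf D D)%:P * 'X ^+ 2).
move=> t; rewrite /constr eM -/(Bf _ _) !(BfDl, BfDr, BfZl, BfZr).
rewrite !(hornerD, hornerN, hornerM, hornerC, hornerX, hornerXn).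
ring.
Qed.

Definition g (i j : nat) : R := if i == j then 1 else if (j < i)%N then 2 else 0.

Lemma sum_g m : \sum_(i < m) \sum_(j < m) g i j = (m * m)%:R.
Proof.
elim: m => [|m IH]; first by rewrite big_ord0.
rewrite big_ord_recr /=.
under eq_bigr do rewrite big_ord_recr /=.
rewrite big_split /= IH big1; last first.
  move=> i _; rewrite /g ltn_eqF // ltnNge ltnW //.
rewrite big_ord_recr /= /g eqxx.
have -> : \sum_(i < m) (if m == i then 1 else if (i < m)%N then 2 else 0 : R) =
          \sum_(i < m) (2 : R).
  apply: eq_bigr => i _; rewrite eq_sym ltn_eqF // ltn_ord //.
rewrite sumr_const card_ord -mulr_natl.
rewrite -[m.+1]addn1 !natrM !natrD; ring.
Qed.

Lemma Xi_g (i j : 'I_n) : Xi R n i j = g i j.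
Proof. by rewrite mxE. Qed.

Lemma sumXi : \sum_(i < n) \sum_(j < n) Xi R n i j = (n * n)%:R.
Proof.
rewrite -sum_g; apply: eq_bigr => i _; apply: eq_bigr => j _; exact: Xi_g.
Qed.

Lemma constr_Pi : constr Pi = 0.
Proof.
set c : R := (n%:R ^+ 2)^-1.
set r := fun i : 'I_n => \sum_(j < n) Xi R n i j.
set s := fun l : 'I_n => \sum_(k < n) Xi R n k l.
have e1 : forall i k, (Xi R n *m Pi) i k = c * r i.
  move=> i k; rewrite mxE /r mulr_sumr; apply: eq_bigr => j _.
  by rewrite [Pi _ _]mxE mulrC.
have e2 : forall i l, (Xi R n *m Pi *m Xi R n) i l = c * r i * s l.
  move=> i l; rewrite mxE /s mulr_sumr; apply: eq_bigr => k _.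
  by rewrite e1.
have e3 : forall i, (Xi R n *m Pi *m Xi R n *m Pi^T) i i = c * r i * (\sum_l s l) * c.
  move=> i; rewrite mxE mulr_sumr mulr_suml; apply: eq_bigr => l _.
  by rewrite e2 !mxE.
rewrite /constr /mxtrace.
under eq_bigr do rewrite e3.
have hs : \sum_l s l = (n * n)%:R by rewrite /s exchange_big /= sumXi.
have hr : \sum_i r i = (n * n)%:R by rewrite /r sumXi.
rewrite hs -!mulr_suml -mulr_sumr hr /c natrM.
by field; rewrite nR0.
Qed.

Lemma exists_mix (Q : 'M[R]_n) (mu : R) : checkerboard Q -> 0 <= mu -> mu < constr Q ->
  exists t, (0 < t <= 1) /\ constr (mix t Q) = mu.
Proof.
move=> cQ mu0 muQ.
have [p hp] := constr_mix_poly Q.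
have f0 : p.[0] = constr Q by rewrite -hp /mix subr0 scale1r scale0r addr0.
have f1 : p.[1] = 0 by rewrite -hp /mix subrr scale0r add0r scale1r constr_Pi.
have hcont : {within `[(0:R), 1], continuous (horner p)}%classic.
  by apply: continuous_subspaceT; exact: continuous_horner.
have hmm : Num.min p.[0] p.[1] <= mu <= Num.max p.[0] p.[1].
  rewrite f0 f1; apply/andP; split.
    by rewrite ge_min mu0 orbT.
  by rewrite le_max (ltW muQ).
have [c hc pc] := IVT ler01 hcont hmm.
move: hc; rewrite in_itv /= => /andP[c0 c1].
exists c; split; last by rewrite hp.
rewrite c1 andbT lt_neqAle c0 andbT; apply/negP => /eqP c0'.
by move: pc; rewrite -c0' f0 => hh; move: muQ; rewrite hh ltxx.
Qed.
End H.

Theorem lemma8 (R : realType) (n : nat) (mu : R) :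
  (2 <= n)%N -> 0 <= mu -> mu <= 1 - n%:R^-1 ->
  forall P : 'M[R]_n, optimal_P mu P <-> optimal_RP mu P.
Proof.
move=> n2 mu0 _ P.
have n0 : (0 < n)%N by apply: leq_trans n2.
split.
  move=> [[cP eP] optP]; split; first by split; rewrite ?eP.
  move=> Q [cQ hQ].
  have [eQ|ltQ] := eqVneq (constr Q) mu; first exact: optP.
  have muQ : mu < constr Q by rewrite lt_neqAle eq_sym ltQ hQ.
  have [t [/andP[t0 t1] ht]] := exists_mix n0 cQ mu0 muQ.
  have ht' : 0 <= t <= 1 by rewrite t1 ltW.
  have h1 := optP _ (conj (checkerboard_mix n0 ht' cQ) ht).
  have h2 := Ient_mix n0 ht' cQ.
  have h3 := Ient_Pi_le n0 cQ.
  nra.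
move=> [[cP hP] optP].
have eP : constr P = mu.
  apply/eqP; rewrite eq_le hP andbT leNgt; apply/negP => muP.
  have [t [/andP[t0 t1] ht]] := exists_mix n0 cP mu0 muP.
  have ht' : 0 <= t <= 1 by rewrite t1 ltW.
  have hf : feasible_RP mu (mix t P) by split; [exact: checkerboard_mix | rewrite ht].
  have h1 := optP _ hf.
  have PPi : P != Pi R n.
    apply/eqP => ePi; move: muP; rewrite ePi constr_Pi // => h; lra.
  have h2 := Ient_mix n0 ht' cP.
  have h3 := Ient_Pi_lt n0 cP PPi.
  nra.
split; first by split.
move=> Q [cQ eQ]; apply: optP; split => //; by rewrite eQ.
Qed.
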